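(* Let $\Lambda$ be a set with $\operatorname{Card}\Lambda\geq\aleph$ and let $(Y,\tau_d)$ be any dendrite. Then there exists an upper semicontinuous decomposition $\mathcal D$ of $(\{0,1\}^\Lambda,\tau_0^\Lambda)$ whose decomposition space $(\mathcal D,\tau(\mathcal D))$ is homeomorphic to $Y$; in particular $(\mathcal D,\tau(\mathcal D))$ is a metrizable space which is a dendrite, although $(\{0,1\}^\Lambda,\tau_0^\Lambda)$ itself is not metrizable.
   Context: $\{0,1\}^\Lambda=\{\varphi:\Lambda\to\{0,1\}\}$ carries the topology $\tau_0^\Lambda$, the product topology of the discrete topology $\tau_0$ on $\{0,1\}$ (base: sets $\{\varphi;\ \varphi(\lambda_i)\in G_{\lambda_i},\ i=1,\dots,n\}$ with $G_{\lambda_i}\subset\{0,1\}$, finitely many $\lambda_i\in\Lambda$). A dendrite is a locally connected, connected, compact metric space containing no simple closed curve. A decomposition $\mathcal D$ of $X$ is a collection of nonempty pairwise disjoint subsets with union $X$; the decomposition topology is $\tau(\mathcal D)=\{\mathcal U\subset\mathcal D;\ \bigcup_{D\in\mathcal U}D \text{ open in } X\}$. $\mathcal D$ is upper semicontinuous if for every $D\in\mathcal D$ and open $U\supseteq D$ there is an open $u\supseteq D$ with $A\subset U$ for all $A\in\mathcal D$ meeting $u$. *)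

(* Defs.v *)
From Stdlib Require Import Reals List Classical.
Open Scope R_scope.

Definition opens (X : Type) := (X -> Prop) -> Prop.

Definition is_metric {Y : Type} (d : Y -> Y -> R) : Prop :=
  (forall x y, 0 <= d x y) /\
  (forall x y, d x y = 0 <-> x = y) /\
  (forall x y, d x y = d y x) /\
  (forall x y z, d x z <= d x y + d y z).

Definition metric_open {Y : Type} (d : Y -> Y -> R) : opens Y :=
  fun U => forall x, U x -> exists e, 0 < e /\ forall y, d x y < e -> U y.

Definition metrizable {X : Type} (op : opens X) : Prop :=
  exists d : X -> X -> R, is_metric d /\ forall U, op U <-> metric_open d U.

Definition continuous {X Y : Type} (opX : opens X) (opY : opens Y) (f : X -> Y) : Prop :=
  forall V, opY V -> opX (fun x => V (f x)).

Definition homeomorphic {X Y : Type} (opX : opens X) (opY : opens Y) : Prop :=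
  exists (f : X -> Y) (g : Y -> X),
    (forall x, g (f x) = x) /\ (forall y, f (g y) = y) /\
    continuous opX opY f /\ continuous opY opX g.

Definition compact {X : Type} (op : opens X) : Prop :=
  forall (I : Type) (U : I -> X -> Prop),
    (forall i, op (U i)) -> (forall x, exists i, U i x) ->
    exists l : list I, forall x, exists i, In i l /\ U i x.

Definition connected_set {X : Type} (op : opens X) (S : X -> Prop) : Prop :=
  ~ exists U V, op U /\ op V /\
      (forall x, S x -> U x \/ V x) /\
      (forall x, S x -> ~ (U x /\ V x)) /\
      (exists x, S x /\ U x) /\ (exists x, S x /\ V x).

Definition connected {X : Type} (op : opens X) : Prop :=
  connected_set op (fun _ => True).

Definition locally_connected {X : Type} (op : opens X) : Prop :=
  forall x U, op U -> U x ->
    exists V, op V /\ V x /\ (forall y, V y -> U y) /\ connected_set op V.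

Definition circle := { p : R * R | (fst p) ^ 2 + (snd p) ^ 2 = 1 }.
Definition circle_dist (p q : circle) : R :=
  sqrt ((fst (proj1_sig p) - fst (proj1_sig q)) ^ 2 +
        (snd (proj1_sig p) - snd (proj1_sig q)) ^ 2).

Definition contains_simple_closed_curve {X : Type} (op : opens X) : Prop :=
  exists f : circle -> X,
    (forall p q, f p = f q -> p = q) /\
    continuous (metric_open circle_dist) op f /\
    (forall U, metric_open circle_dist U ->
       exists V, op V /\ forall p, U p <-> V (f p)).

Definition dendrite {Y : Type} (d : Y -> Y -> R) : Prop :=
  is_metric d /\ (exists y : Y, True) /\
  compact (metric_open d) /\ connected (metric_open d) /\
  locally_connected (metric_open d) /\
  ~ contains_simple_closed_curve (metric_open d).

(* tau_0^Lambda: U is open iff it is a union of basic sets, i.e. every point phi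
   of U has a finite set of coordinates l such that all psi agreeing with phi on l
   lie in U. *)
Definition prod_open (L : Type) : opens (L -> bool) :=
  fun U => forall phi, U phi -> exists l : list L,
    forall psi, (forall lam, In lam l -> psi lam = phi lam) -> U psi.

Definition decomposition {X : Type} (D : (X -> Prop) -> Prop) : Prop :=
  (forall A, D A -> exists x, A x) /\
  (forall A B, D A -> D B -> A <> B -> forall x, ~ (A x /\ B x)) /\
  (forall x, exists A, D A /\ A x).

Definition dec_space {X : Type} (D : (X -> Prop) -> Prop) := { A : X -> Prop | D A }.

Definition dec_open {X : Type} (op : opens X) (D : (X -> Prop) -> Prop)
  : opens (dec_space D) :=
  fun UU => op (fun x => exists A : dec_space D, UU A /\ proj1_sig A x).

Definition usc {X : Type} (op : opens X) (D : (X -> Prop) -> Prop) : Prop :=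
  forall A, D A -> forall U, op U -> (forall x, A x -> U x) ->
    exists u, op u /\ (forall x, A x -> u x) /\
      forall B, D B -> (exists x, B x /\ u x) -> forall x, B x -> U x.

(* Main.v *)
Require Import Defs.
From Stdlib Require Import Reals List Classical.
Open Scope R_scope.
From Stdlib Require Import Lra Lia Cantor ZArith.
From Stdlib Require Import ClassicalEpsilon FunctionalExtensionality ProofIrrelevance.
Open Scope R_scope.

Definition tstep (v : R) (p : R * R) : R * R :=
  let (a, b) := p in
  if Rlt_dec v ((a + b) / 2) then (a + 2 * (b - a) / 3, b) else (a, a + (b - a) / 3).

Fixpoint tear (u : nat -> R) (n : nat) : R * R :=
  match n with
  | O => (0, 1)
  | S k => tstep (u k) (tear u k)
  end.

Lemma tstep_prop (v : R) (p : R * R) : fst p < snd p ->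
  fst (tstep v p) < snd (tstep v p) /\ fst p <= fst (tstep v p) /\
  snd (tstep v p) <= snd p /\ (v < fst (tstep v p) \/ snd (tstep v p) < v).
Proof.
  destruct p as [a b]; simpl. intros H.
  destruct (Rlt_dec v ((a + b) / 2)) as [h|h]; simpl; [|apply Rnot_lt_le in h]; lra.
Qed.

Lemma tear_prop (u : nat -> R) (n : nat) :
  fst (tear u n) < snd (tear u n) /\ fst (tear u n) <= fst (tear u (S n)) /\ snd (tear u (S n)) <= snd (tear u n) /\ (u n < fst (tear u (S n)) \/ snd (tear u (S n)) < u n).
Proof.
  assert (H0 : forall m, fst (tear u m) < snd (tear u m)).
  { induction m. simpl; lra. simpl. apply tstep_prop; auto. }
  split. apply H0. simpl. apply tstep_prop. apply H0.
Qed.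

Lemma tear_mono (u : nat -> R) (n p : nat) :
  fst (tear u n) <= fst (tear u (n + p)) /\ snd (tear u (n + p)) <= snd (tear u n).
Proof.
  induction p as [|p IH].
  - rewrite Nat.add_0_r; lra.
  - rewrite Nat.add_succ_r. pose proof (tear_prop u (n + p)). lra.
Qed.

Lemma tear_ab (u : nat -> R) (n m : nat) : fst (tear u n) <= snd (tear u m).
Proof.
  destruct (Nat.le_ge_cases n m) as [H|H].
  - replace m with (n + (m - n))%nat by lia.
    pose proof (tear_mono u n (m - n)). pose proof (tear_prop u (n + (m - n))). lra.
  - replace n with (m + (n - m))%nat by lia.
    pose proof (tear_mono u m (n - m)). pose proof (tear_prop u (m + (n - m))). lra.
Qed.

Lemma R_not_countable (u : nat -> R) : exists r, forall n, u n <> r.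
Proof.
  set (E := fun x => exists n, x = fst (tear u n)).
  assert (Hb : bound E).
  { exists 1. intros x [n ->]. pose proof (tear_ab u n 0). simpl in H. lra. }
  assert (Hne : exists x, E x) by (exists 0; exists 0%nat; reflexivity).
  destruct (completeness E Hb Hne) as [x [Hub Hlub]].
  exists x. intros n Heq.
  assert (H1 : fst (tear u (S n)) <= x) by (apply Hub; exists (S n); reflexivity).
  assert (H2 : x <= snd (tear u (S n))).
  { apply Hlub. intros y [m ->]. apply tear_ab. }
  pose proof (tear_prop u n). lra.
Qed.

Definition chainP {T : Type} (le : T -> T -> Prop) (C : T -> Prop) : Prop :=
  forall x y, C x -> C y -> le x y \/ le y x.

Inductive tower {T : Type} (g : T -> T) (sup : (T -> Prop) -> T)
   (le : T -> T -> Prop) : T -> Prop :=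
| tw_g : forall x, tower g sup le x -> tower g sup le (g x)
| tw_sup : forall C : T -> Prop, (forall c, C c -> tower g sup le c) ->
    chainP le C -> tower g sup le (sup C).

Lemma BW (T : Type) (le : T -> T -> Prop) (g : T -> T) (sup : (T -> Prop) -> T)
  (refl : forall x, le x x)
  (trans : forall x y z, le x y -> le y z -> le x z)
  (antisym : forall x y, le x y -> le y x -> x = y)
  (infl : forall x, le x (g x))
  (ub : forall C c, chainP le C -> C c -> le c (sup C))
  (least : forall C u, chainP le C -> (forall c, C c -> le c u) -> le (sup C) u) :
  exists s, g s = s /\ tower g sup le s.
Proof.
  set (M := tower g sup le).
  set (extreme := fun c => forall x, M x -> le x c -> x <> c -> le (g x) c).
  assert (L1 : forall c, M c -> extreme c -> forall x, M x -> le x c \/ le (g c) x).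
  { intros c Mc Ec x Mx. induction Mx as [x Mx IH | C HC IH Hch].
    - destruct IH as [H|H].
      + destruct (classic (x = c)) as [->|Hne].
        * right. apply refl.
        * left. apply Ec; auto.
      + right. eapply trans; [exact H | apply infl].
    - destruct (classic (exists y, C y /\ le (g c) y)) as [[y [Cy Hy]]|Hn].
      + right. eapply trans; [exact Hy | apply ub; auto].
      + left. apply least; auto. intros y Cy. destruct (IH y Cy) as [H|H]; auto.
        exfalso; apply Hn; eauto. }
  assert (L2 : forall c, M c -> extreme c).
  { intros c Mc. induction Mc as [c Mc IH | C HC IH Hch].
    - intros x Mx Hle Hne. destruct (L1 c Mc IH x Mx) as [H|H].
      + destruct (classic (x = c)) as [->|Hne2].
        * apply refl.
        * eapply trans; [apply IH; auto | apply infl].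
      + exfalso. apply Hne. apply antisym; auto.
    - intros x Mx Hle Hne.
      assert (Hex : exists c', C c' /\ ~ le c' x).
      { apply NNPP. intros Hn. apply Hne. apply antisym; auto.
        apply least; auto. intros c' Cc'. apply NNPP. intros Hn2. apply Hn. eauto. }
      destruct Hex as [c' [Cc' Hn']].
      destruct (L1 c' (HC c' Cc') (IH c' Cc') x Mx) as [H|H].
      + eapply trans; [apply (IH c' Cc'); auto | apply ub; auto].
        intros ->. apply Hn'. apply refl.
      + exfalso. apply Hn'. eapply trans; [apply infl | exact H]. }
  assert (Hch : chainP le M).
  { intros x c Mx Mc. destruct (L1 c Mc (L2 c Mc) x Mx) as [H|H]; auto.
    right. eapply trans; [apply infl | exact H]. }
  exists (sup M). split.
  - apply antisym; auto. apply ub; auto. apply tw_g. apply tw_sup; auto.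
  - apply tw_sup; auto.
Qed.

Definition ple {L : Type} (p q : L -> option bool) : Prop :=
  forall l b, p l = Some b -> q l = Some b.
Definition cyl {L : Type} (ls : list L) (p : L -> option bool) (x : L -> bool) : Prop :=
  forall l, In l ls -> forall b, p l = Some b -> x l = b.
Definition FC {L I : Type} (U : I -> (L -> bool) -> Prop) (S : (L -> bool) -> Prop) : Prop :=
  exists li : list I, forall x, S x -> exists i, In i li /\ U i x.
Definition good {L I : Type} (U : I -> (L -> bool) -> Prop) (p : L -> option bool) : Prop :=
  forall ls, ~ FC U (cyl ls p).

Definition psup {L : Type} (C : (L -> option bool) -> Prop) (l : L) : option bool :=
  match excluded_middle_informative (exists b, exists c, C c /\ c l = Some b) with
  | left H => Some (proj1_sig (constructive_indefinite_description _ H))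
  | right _ => None
  end.

Lemma psup_spec {L : Type} (C : (L -> option bool) -> Prop) l b :
  psup C l = Some b -> exists c, C c /\ c l = Some b.
Proof.
  unfold psup. destruct excluded_middle_informative as [H|H]; [|discriminate].
  destruct (constructive_indefinite_description _ H) as [b' Hb']; simpl.
  intros E; inversion E; subst; auto.
Qed.

Lemma psup_ub {L : Type} (C : (L -> option bool) -> Prop) c :
  chainP ple C -> C c -> ple c (psup C).
Proof.
  intros Hch Cc l b Hb. unfold psup.
  destruct excluded_middle_informative as [H|H].
  - destruct (constructive_indefinite_description _ H) as [b' [c' [Cc' Hc']]]; simpl.
    destruct (Hch c c' Cc Cc') as [E|E].
    + rewrite (E _ _ Hb) in Hc'. congruence.
    + rewrite (E _ _ Hc') in Hb. congruence.
  - exfalso; apply H; eauto.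
Qed.

Lemma psup_least {L : Type} (C : (L -> option bool) -> Prop) u :
  (forall c, C c -> ple c u) -> ple (psup C) u.
Proof.
  intros H l b Hb. destruct (psup_spec C l b Hb) as [c [Cc Hc]]. exact (H c Cc l b Hc).
Qed.

Lemma ple_antisym {L : Type} (p q : L -> option bool) : ple p q -> ple q p -> p = q.
Proof.
  intros H1 H2. apply functional_extensionality. intros l.
  destruct (p l) as [b|] eqn:E.
  - symmetry; auto.
  - destruct (q l) as [b|] eqn:E2; auto. rewrite (H2 _ _ E2) in E; discriminate.
Qed.

Lemma cube_compact (L : Type) : Defs.compact (prod_open L).
Proof.
  intros I U HU Hcov.
  apply NNPP; intros Hnfc.
  assert (Hbot : good U (fun _ : L => None)).
  { intros ls [li Hli]. apply Hnfc. exists li. intros x.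
    apply Hli. intros l _ b E; discriminate. }
  set (gn := fun p : L -> option bool =>
    match excluded_middle_informative (exists q, good U q /\ ple p q /\ p <> q) with
    | left H => proj1_sig (constructive_indefinite_description _ H)
    | right _ => p end).
  assert (Hgn : forall p, (good U p -> good U (gn p)) /\ ple p (gn p) /\
     (gn p = p -> ~ exists q, good U q /\ ple p q /\ p <> q)).
  { intros p. unfold gn. destruct excluded_middle_informative as [H|H].
    - destruct (constructive_indefinite_description _ H) as [q [Hq1 [Hq2 Hq3]]]; simpl.
      split; [auto|split; [auto| intros E; congruence]].
    - split; [auto|split; [intros l b E; auto| auto]]. }
  assert (HBW : exists s, gn s = s /\ tower gn psup ple s).
  { apply BW.
    - intros x l b E; auto.
    - intros x y z H1 H2 l b E; auto.
    - apply ple_antisym.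
    - intros; apply Hgn.
    - intros; apply psup_ub; auto.
    - intros; apply psup_least; auto. }
  destruct HBW as [s [Hfix Htw]].
  { assert (Hgs : good U s).
    { clear Hfix. induction Htw as [x Hx IH | C HC IH Hch].
      - exact (proj1 (Hgn x) IH).
      - intros ls. 
        assert (Hc : exists c, (c = (fun _ => None) \/ C c) /\
                  forall l b, In l ls -> psup C l = Some b -> c l = Some b).
        { induction ls as [|l0 ls IHls].
          - exists (fun _ => None). split; auto. intros l b [].
          - destruct IHls as [c [Hc1 Hc2]].
            destruct (psup C l0) as [b0|] eqn:E0.
            + destruct (psup_spec C l0 b0 E0) as [c' [Cc' Hc']].
              destruct Hc1 as [->|Cc].
              * exists c'. split; auto. intros l b [<-|Hin] E.
                -- congruence.
                -- specialize (Hc2 l b Hin E). discriminate.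
              * destruct (Hch c c' Cc Cc') as [Hle|Hle].
                -- exists c'. split; auto. intros l b [<-|Hin] E.
                   ++ congruence.
                   ++ apply Hle; auto.
                -- exists c. split; auto. intros l b [<-|Hin] E.
                   ++ rewrite E0 in E. inversion E; subst. apply Hle; auto.
                   ++ auto.
            + exists c. split; auto. intros l b [<-|Hin] E.
              * congruence.
              * auto. }
        destruct Hc as [c [[->|Cc] Hc2]].
        + intros [li Hli]. apply (Hbot nil). exists li. intros x _. apply Hli.
          intros l Hin b E. specialize (Hc2 l b Hin E). discriminate.
        + intros [li Hli]. apply (IH c Cc ls). exists li. intros x Hx. apply Hli.
          intros l Hin b E. apply Hx; auto. }
    assert (Hmax := proj2 (proj2 (Hgn s)) Hfix).
    assert (Htot : forall l, s l <> None).
    { intros l0 E0.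
      set (upd := fun b : bool => fun l => match excluded_middle_informative (l = l0) with
                   | left _ => Some b | right _ => s l end).
      assert (Hext : forall b, ple s (upd b) /\ s <> upd b).
      { intros b. split.
        - intros l b' E. unfold upd. destruct excluded_middle_informative; subst; congruence.
        - intros E. assert (E1 := f_equal (fun f => f l0) E). simpl in E1.
          unfold upd in E1. destruct excluded_middle_informative; congruence. }
      assert (Hng : forall b, exists ls, FC U (cyl ls (upd b))).
      { intros b. apply NNPP. intros Hn. apply Hmax. exists (upd b). split.
        - intros ls Hf. apply Hn. eauto.
        - apply Hext. }
      destruct (Hng false) as [ls0 [li0 H0]]. destruct (Hng true) as [ls1 [li1 H1]].
      apply (Hgs (ls0 ++ ls1)). exists (li0 ++ li1). intros x Hx.
      assert (Hx' : forall b, x l0 = b -> exists i, In i (li0 ++ li1) /\ U i x).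
      { intros b Eb. 
        assert (Hc : cyl (if b then ls1 else ls0) (upd b) x).
        { intros l Hin b' E. unfold upd in E. destruct excluded_middle_informative.
          - subst. congruence.
          - apply Hx; auto. apply in_or_app. destruct b; auto. }
        destruct b.
        - destruct (H1 x Hc) as [i [Hi Ui]]. exists i; split; auto. apply in_or_app; auto.
        - destruct (H0 x Hc) as [i [Hi Ui]]. exists i; split; auto. apply in_or_app; auto. }
      apply (Hx' (x l0)); reflexivity. }
    set (x := fun l => match s l with Some b => b | None => false end).
    destruct (Hcov x) as [i Hi].
    destruct (HU i x Hi) as [l Hl].
    apply (Hgs l). exists (i :: nil). intros y Hy. exists i. split; [left; auto|].
    apply Hl. intros lam Hin. unfold x. destruct (s lam) as [b|] eqn:E.
    + apply Hy; auto.
    + exfalso; apply (Htot lam E). }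
Qed.

Lemma m_pos {Y} (d : Y -> Y -> R) : is_metric d -> forall x y, 0 <= d x y.
Proof. intros H; apply H. Qed.
Lemma m_zero {Y} (d : Y -> Y -> R) : is_metric d -> forall x, d x x = 0.
Proof. intros H x; apply (proj1 (proj2 H)); auto. Qed.
Lemma m_eq {Y} (d : Y -> Y -> R) : is_metric d -> forall x y, d x y = 0 -> x = y.
Proof. intros H x y; apply (proj1 (proj2 H)). Qed.
Lemma m_sym {Y} (d : Y -> Y -> R) : is_metric d -> forall x y, d x y = d y x.
Proof. intros H; apply H. Qed.
Lemma m_tri {Y} (d : Y -> Y -> R) : is_metric d -> forall x y z, d x z <= d x y + d y z.
Proof. intros H; apply H. Qed.

Lemma ball_open {Y} (d : Y -> Y -> R) (c : Y) (r : R) : is_metric d ->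
  metric_open d (fun y => d c y < r).
Proof.
  intros Hm x Hx. exists (r - d c x). split; [lra|].
  intros y Hy. pose proof (m_tri d Hm c x y). lra.
Qed.

Lemma far_open {Y} (d : Y -> Y -> R) (z : Y) (c : R) : is_metric d ->
  metric_open d (fun y => c < d z y).
Proof.
  intros Hm x Hx. exists (d z x - c). split; [lra|].
  intros y Hy. pose proof (m_tri d Hm z y x). pose proof (m_sym d Hm x y). lra.
Qed.

Fixpoint lmax {A} (f : A -> nat) (l : list A) : nat :=
  match l with nil => O | a :: t => Nat.max (f a) (lmax f t) end.
Lemma lmax_spec {A} (f : A -> nat) l a : In a l -> (f a <= lmax f l)%nat.
Proof.
  induction l as [|b t IH]; simpl; [tauto|]. intros [->|H]; [lia|]. specialize (IH H); lia.
Qed.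

Lemma limit_exists {Y} (d : Y -> Y -> R) (Hm : is_metric d)
  (Hc : Defs.compact (metric_open d)) (y : nat -> Y) (B : nat -> R)
  (HB : forall n m, (n <= m)%nat -> d (y n) (y m) <= B n) :
  exists z, forall n, d (y n) z <= B n.
Proof.
  apply NNPP. intros Hn.
  assert (H1 : forall z, exists n, B n < d (y n) z).
  { intros z. apply NNPP. intros H2. apply Hn. exists z. intros n.
    apply Rnot_lt_le. intros H3. apply H2. eauto. }
  set (nz := fun z => proj1_sig (constructive_indefinite_description _ (H1 z))).
  assert (Hnz : forall z, B (nz z) < d (y (nz z)) z).
  { intros z. unfold nz. destruct constructive_indefinite_description; auto. }
  destruct (Hc Y (fun z w => d z w < d (y (nz z)) z - B (nz z))) as [l Hl].
  - intros z. apply ball_open; auto.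
  - intros w. exists w. rewrite (m_zero d Hm). specialize (Hnz w). lra.
  - set (m := lmax nz l). destruct (Hl (y m)) as [z [Hin Hz]].
    pose proof (lmax_spec nz l z Hin).
    pose proof (HB (nz z) m H).
    pose proof (m_tri d Hm (y (nz z)) (y m) z).
    pose proof (m_sym d Hm z (y m)). lra.
Qed.

Lemma nets_exist {Y} (d : Y -> Y -> R) (Hm : is_metric d)
  (Hc : Defs.compact (metric_open d)) (r : R) (Hr : 0 < r) :
  exists l : list Y, forall y, exists c, In c l /\ d y c < r.
Proof.
  destruct (Hc Y (fun c y => d c y < r)) as [l Hl].
  - intros c; apply ball_open; auto.
  - intros y. exists y. rewrite (m_zero d Hm). auto.
  - exists l. intros y. destruct (Hl y) as [c [Hin H]]. exists c. split; auto.
    rewrite (m_sym d Hm). auto.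
Qed.

Fixpoint lead (k : nat) (s : nat -> bool) : nat :=
  match k with O => O | S k' => if s O then S (lead k' (fun i => s (S i))) else O end.

Lemma lead_ext k s t : (forall i, (i < k)%nat -> s i = t i) -> lead k s = lead k t.
Proof.
  revert s t. induction k as [|k IH]; intros s t H; simpl; auto.
  rewrite (H O ltac:(lia)). destruct (t O); auto. f_equal. apply IH. intros i Hi. apply H. lia.
Qed.

Lemma lead_ltb M k : lead M (fun i => Nat.ltb i k) = Nat.min k M.
Proof.
  revert k. induction M as [|M IH]; intros k; simpl.
  - lia.
  - destruct k as [|k]; simpl; auto. f_equal. rewrite <- IH.
    apply lead_ext. intros i _. reflexivity.
Qed.

Definition rr (n : nat) : R := / 2 ^ n.
Lemma rr_pos n : 0 < rr n.
Proof. unfold rr. apply Rinv_0_lt_compat. apply pow_lt. lra. Qed.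
Lemma rr_S n : rr (S n) = rr n / 2.
Proof. unfold rr. simpl. rewrite Rinv_mult. unfold Rdiv. ring. Qed.

Lemma pow2_ge n : INR n + 1 <= 2 ^ n.
Proof.
  induction n as [|n IH]; [simpl; lra|].
  replace (2 ^ S n) with (2 * 2 ^ n) by (simpl; ring). rewrite S_INR.
  pose proof (pos_INR n). lra.
Qed.

Lemma rr_small e : 0 < e -> exists n, rr n < e.
Proof.
  intros He. destruct (archimed (/ e)) as [H1 _].
  pose proof (Rinv_0_lt_compat e He) as Hie.
  assert (Hz : (0 <= up (/ e))%Z).
  { apply le_IZR. lra. }
  set (N := Z.to_nat (up (/ e))).
  assert (HN : INR N = IZR (up (/ e))).
  { unfold N. rewrite INR_IZR_INZ. rewrite Z2Nat.id; auto. }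
  pose proof (pow2_ge N).
  exists N. unfold rr. rewrite <- (Rinv_inv e).
  apply Rinv_lt_contravar.
  - apply Rmult_lt_0_compat; auto. apply pow_lt; lra.
  - lra.
Qed.

Definition cand {Y} (net : nat -> list Y) (ys0 : Y) (n : nat) (s : nat -> bool) : Y :=
  nth (lead (length (net n)) (fun i => s (to_nat (n, i)))) (net n) ys0.

Fixpoint ys {Y} (d : Y -> Y -> R) (net : nat -> list Y) (ys0 : Y) (s : nat -> bool) (n : nat) : Y :=
  match n with
  | O => cand net ys0 O s
  | S k => if Rlt_dec (d (ys d net ys0 s k) (cand net ys0 (S k) s)) (2 * rr k)
           then cand net ys0 (S k) s else ys d net ys0 s k
  end.

Lemma ys_step {Y} (d : Y -> Y -> R) (Hm : is_metric d) net ys0 s k :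
  d (ys d net ys0 s k) (ys d net ys0 s (S k)) < 2 * rr k.
Proof.
  simpl. destruct Rlt_dec as [H|H]; auto. rewrite (m_zero d Hm). pose proof (rr_pos k); lra.
Qed.

Lemma ys_cauchy {Y} (d : Y -> Y -> R) (Hm : is_metric d) net ys0 s n p :
  d (ys d net ys0 s n) (ys d net ys0 s (n + p)) <= 4 * rr n - 4 * rr (n + p).
Proof.
  induction p as [|p IH].
  - rewrite Nat.add_0_r, (m_zero d Hm). lra.
  - rewrite Nat.add_succ_r.
    pose proof (m_tri d Hm (ys d net ys0 s n) (ys d net ys0 s (n + p)) (ys d net ys0 s (S (n + p)))).
    pose proof (ys_step d Hm net ys0 s (n + p)). rewrite rr_S. lra.
Qed.

Lemma ys_cauchy' {Y} (d : Y -> Y -> R) (Hm : is_metric d) net ys0 s n m :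
  (n <= m)%nat -> d (ys d net ys0 s n) (ys d net ys0 s m) <= 4 * rr n.
Proof.
  intros H. replace m with (n + (m - n))%nat by lia.
  pose proof (ys_cauchy d Hm net ys0 s n (m - n)). pose proof (rr_pos (n + (m - n))). lra.
Qed.

Lemma ys_agree {Y} (d : Y -> Y -> R) net (ys0 : Y) s t n :
  (forall m i, (m <= n)%nat -> (i < length (net m))%nat -> s (to_nat (m, i)) = t (to_nat (m, i))) ->
  ys d net ys0 s n = ys d net ys0 t n.
Proof.
  intros H.
  assert (Hc : forall m, (m <= n)%nat -> cand net ys0 m s = cand net ys0 m t).
  { intros m Hm. unfold cand. f_equal. apply lead_ext. intros i Hi. apply H; auto. }
  induction n as [|n IH].
  - simpl. apply Hc; auto.
  - simpl. rewrite IH, (Hc (S n)); auto.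
Qed.

Definition Ppos {Y} (net : nat -> list Y) (n : nat) : list nat :=
  flat_map (fun m => map (fun i => to_nat (m, i)) (seq 0 (length (net m)))) (seq 0 (S n)).

Lemma Ppos_in {Y} (net : nat -> list Y) n m i :
  (m <= n)%nat -> (i < length (net m))%nat -> In (to_nat (m, i)) (Ppos net n).
Proof.
  intros H1 H2. unfold Ppos. apply in_flat_map. exists m. split.
  - apply in_seq. lia.
  - apply (in_map (fun i0 => to_nat (m, i0))). apply in_seq. lia.
Qed.

Lemma cantor_surj {Y} (d : Y -> Y -> R) (Hm : is_metric d)
  (Hc : Defs.compact (metric_open d)) (ys0 : Y) :
  exists h : (nat -> bool) -> Y, (forall y, exists s, h s = y) /\
    (forall s e, 0 < e -> exists P : list nat, forall t, (forall p, In p P -> t p = s p) ->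
        d (h s) (h t) < e).
Proof.
  assert (Hnet : forall n, exists l : list Y, forall y, exists c, In c l /\ d y c < rr n).
  { intros n. apply nets_exist; auto. apply rr_pos. }
  set (net := fun n => proj1_sig (constructive_indefinite_description _ (Hnet n))).
  assert (Hnet' : forall n y, exists c, In c (net n) /\ d y c < rr n).
  { intros n. unfold net. destruct constructive_indefinite_description; auto. }
  assert (Hlim : forall s, exists z, forall n, d (ys d net ys0 s n) z <= 4 * rr n).
  { intros s. apply limit_exists; auto. intros; apply ys_cauchy'; auto. }
  set (h := fun s => proj1_sig (constructive_indefinite_description _ (Hlim s))).
  assert (Hh : forall s n, d (ys d net ys0 s n) (h s) <= 4 * rr n).
  { intros s. unfold h. destruct constructive_indefinite_description; auto. }
  exists h. split.
  - intros y.
    assert (Hk : forall n, exists k, (k < length (net n))%nat /\ d y (nth k (net n) ys0) < rr n).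
    { intros n. destruct (Hnet' n y) as [c [Hin Hd]].
      destruct (In_nth _ _ ys0 Hin) as [k [Hk1 Hk2]]. exists k. rewrite Hk2. auto. }
    set (k := fun n => proj1_sig (constructive_indefinite_description _ (Hk n))).
    assert (Hk' : forall n, (k n < length (net n))%nat /\ d y (nth (k n) (net n) ys0) < rr n).
    { intros n. unfold k. destruct constructive_indefinite_description; auto. }
    set (s := fun p => let (m, i) := of_nat p in Nat.ltb i (k m)).
    assert (Hcand : forall n, cand net ys0 n s = nth (k n) (net n) ys0).
    { intros n. unfold cand. f_equal.
      replace (lead (length (net n)) (fun i => s (to_nat (n, i))))
        with (lead (length (net n)) (fun i => Nat.ltb i (k n))).
      - rewrite lead_ltb. specialize (Hk' n). lia.
      - apply lead_ext. intros i _. unfold s. rewrite cancel_of_to. reflexivity. }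
    assert (Hys : forall n, ys d net ys0 s n = nth (k n) (net n) ys0).
    { induction n as [|n IH]; simpl.
      - apply Hcand.
      - rewrite IH, Hcand. destruct Rlt_dec as [_|Hn]; auto. exfalso; apply Hn.
        pose proof (m_tri d Hm (nth (k n) (net n) ys0) y (nth (k (S n)) (net (S n)) ys0)).
        rewrite (m_sym d Hm _ y) in H. pose proof (Hk' n). pose proof (Hk' (S n)).
        rewrite rr_S in *. pose proof (rr_pos n). lra. }
    exists s. apply (m_eq d Hm). apply Rle_antisym; [|apply (m_pos d Hm)].
    apply Rnot_lt_le. intros Hpos.
    destruct (rr_small (d (h s) y / 5)) as [n Hn]; [lra|].
    pose proof (Hh s n). rewrite Hys in H.
    pose proof (m_tri d Hm (h s) (nth (k n) (net n) ys0) y).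
    pose proof (m_sym d Hm (h s) (nth (k n) (net n) ys0)).
    pose proof (m_sym d Hm y (nth (k n) (net n) ys0)).
    pose proof (Hk' n). lra.
  - intros s e He. destruct (rr_small (e / 8)) as [n Hn]; [lra|].
    exists (Ppos net n). intros t Ht.
    assert (E : ys d net ys0 s n = ys d net ys0 t n).
    { apply ys_agree. intros m i H1 H2. symmetry. apply Ht. apply Ppos_in; auto. }
    pose proof (Hh s n). pose proof (Hh t n). rewrite E in H.
    pose proof (m_tri d Hm (h s) (ys d net ys0 t n) (h t)).
    pose proof (m_sym d Hm (h s) (ys d net ys0 t n)). lra.
Qed.

Definition fcont {L Y} (d : Y -> Y -> R) (f : (L -> bool) -> Y) : Prop :=
  forall V, metric_open d V -> prod_open L (fun x => V (f x)).

Lemma closed_key {L Y} (d : Y -> Y -> R) (Hm : is_metric d) (f : (L -> bool) -> Y)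
  (Hf : fcont d f) (y : Y) (U : (L -> bool) -> Prop) :
  prod_open L U -> (forall x, f x = y -> U x) ->
  exists del, 0 < del /\ forall x, d y (f x) < del -> U x.
Proof.
  intros HU HA.
  set (W := fun (z : L -> bool) (x : L -> bool) =>
              U x \/ (0 < d (f z) y /\ d (f z) y / 2 < d y (f x))).
  destruct (cube_compact L (L -> bool) W) as [l Hl].
  - intros z x Hx.
    destruct (classic (U x)) as [Hu|Hu].
    + destruct (HU x Hu) as [l Hl]. exists l. intros psi Hp. left. auto.
    + destruct Hx as [Hx|[Hx1 Hx2]]; [tauto|].
      destruct (Hf _ (far_open d y (d (f z) y / 2) Hm) x Hx2) as [l Hl].
      exists l. intros psi Hp. right. split; auto.
  - intros x. exists x. destruct (classic (U x)) as [Hu|Hu]; [left; auto|right].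
    assert (Hne : f x <> y) by (intros E; apply Hu; auto).
    assert (0 < d (f x) y).
    { destruct (Rle_lt_or_eq_dec 0 (d (f x) y) (m_pos d Hm _ _)) as [H|H]; auto.
      exfalso; apply Hne; apply (m_eq d Hm); auto. }
    split; auto. rewrite (m_sym d Hm y). lra.
  - set (g := fun z => match Rlt_dec 0 (d (f z) y) with
                       | left _ => d (f z) y / 2 | right _ => 1 end).
    assert (Hg : forall z, 0 < g z).
    { intros z. unfold g. destruct Rlt_dec; lra. }
    set (del := fold_right (fun z acc => Rmin (g z) acc) 1 l).
    assert (Hdel : 0 < del /\ forall z, In z l -> del <= g z).
    { unfold del. clear Hl. induction l as [|z t IH]; simpl.
      - split; [lra| tauto].
      - destruct IH as [IH1 IH2]. split.
        + apply Rmin_pos; auto.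
        + intros w [<-|Hw].
          * apply Rmin_l.
          * eapply Rle_trans; [apply Rmin_r| auto]. }
    exists del. split; [apply Hdel|]. intros x Hx.
    destruct (Hl x) as [z [Hin [Hu|[Hz1 Hz2]]]]; auto.
    exfalso. pose proof (proj2 Hdel z Hin). unfold g in H.
    destruct Rlt_dec; [lra| tauto].
Qed.

Lemma decomp_part {L Y} (d : Y -> Y -> R) (Hm : is_metric d) (f : (L -> bool) -> Y)
  (Hf : fcont d f) (Hs : forall y, exists x, f x = y) :
  exists D : ((L -> bool) -> Prop) -> Prop,
     decomposition D /\ usc (prod_open L) D /\
     homeomorphic (dec_open (prod_open L) D) (metric_open d).
Proof.
  set (D := fun A : (L -> bool) -> Prop => exists y, A = (fun x => f x = y)).
  exists D. split; [|split].
  - split; [|split].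
    + intros A [y ->]. destruct (Hs y) as [x Hx]. eauto.
    + intros A B [y ->] [y' ->] Hne x [H1 H2]. apply Hne. subst. reflexivity.
    + intros x. exists (fun z => f z = f x). split; [exists (f x)|]; reflexivity.
  - intros A [y ->] U HU HA.
    destruct (closed_key d Hm f Hf y U HU HA) as [del [Hdel H]].
    exists (fun x => d y (f x) < del). split; [|split].
    + apply (Hf (fun z => d y z < del)). apply ball_open; auto.
    + intros x Hx. rewrite Hx, (m_zero d Hm). auto.
    + intros B [y' ->] [x [Hx1 Hx2]] x' Hx'. apply H. rewrite Hx', <- Hx1. auto.
  - set (F := fun A : dec_space D => proj1_sig (constructive_indefinite_description _ (proj2_sig A))).
    assert (HF : forall A, proj1_sig A = (fun x => f x = F A)).
    { intros A. unfold F. destruct constructive_indefinite_description; auto. }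
    set (G := fun y => exist D (fun x => f x = y) (ex_intro _ y eq_refl)).
    assert (FG : forall y, F (G y) = y).
    { intros y. destruct (Hs y) as [x Hx]. pose proof (HF (G y)) as E. simpl in E.
      assert (E2 := f_equal (fun P => P x) E). simpl in E2. assert (f x = F (G y)) by (rewrite <- E2; auto). congruence. }
    assert (GF : forall A, G (F A) = A).
    { intros [a pa]. unfold G. pose proof (HF (exist D a pa)) as E. simpl in E.
      apply eq_sig_hprop; [intros; apply proof_irrelevance | simpl; symmetry; exact E]. }
    exists F, G. split; [exact GF|split; [exact FG|split]].
    + intros V HV. unfold dec_open. intros phi [A [HA Hphi]].
      rewrite HF in Hphi. simpl in Hphi.
      destruct (Hf V HV phi) as [l Hl]; [rewrite Hphi; auto|].
      exists l. intros psi Hp. exists (G (f psi)). split.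
      * rewrite FG. apply Hl; auto.
      * simpl. reflexivity.
    + intros UU HUU y Hy. unfold dec_open in HUU.
      destruct (closed_key d Hm f Hf y _ HUU) as [del [Hdel H]].
      { intros x Hx. exists (G y). split; [exact Hy | exact Hx]. }
      exists del. split; auto. intros y' Hy'.
      destruct (Hs y') as [x Hx]. subst y'.
      destruct (H x Hy') as [A [HA HAx]].
      rewrite HF in HAx. simpl in HAx. rewrite HAx, GF. auto.
Qed.

Lemma not_metrizable (L : Type) (j : R -> L) (Hj : forall a b, j a = j b -> a = b) :
  ~ metrizable (prod_open L).
Proof.
  intros [d' [Hm Hiff]].
  set (phi := fun _ : L => false).
  assert (Hl : forall n : nat, exists l : list L, forall psi,
     (forall lam, In lam l -> psi lam = phi lam) -> d' phi psi < / INR (S n)).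
  { intros n. assert (Ho : prod_open L (fun x => d' phi x < / INR (S n))).
    { apply Hiff. apply ball_open; auto. }
    apply Ho. rewrite (m_zero d' Hm). apply Rinv_0_lt_compat. apply lt_0_INR. lia. }
  set (l := fun n => proj1_sig (constructive_indefinite_description _ (Hl n))).
  assert (Hl' : forall n psi, (forall lam, In lam (l n) -> psi lam = phi lam) ->
                  d' phi psi < / INR (S n)).
  { intros n. unfold l. destruct constructive_indefinite_description; auto. }
  set (pre := fun lam : L => match excluded_middle_informative (exists r, j r = lam) with
      | left H => proj1_sig (constructive_indefinite_description _ H) | right _ => 0 end).
  assert (Hpre : forall r, pre (j r) = r).
  { intros r. unfold pre. destruct excluded_middle_informative as [H|H].
    - destruct constructive_indefinite_description as [r' Hr']. simpl. auto.
    - exfalso; eauto. }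
  set (u := fun p : nat => let (n, k) := of_nat p in
             match nth_error (l n) k with Some lam => pre lam | None => 0 end).
  destruct (R_not_countable u) as [r0 Hr0].
  set (lam0 := j r0).
  assert (Hnot : forall n, ~ In lam0 (l n)).
  { intros n Hin. destruct (In_nth_error _ _ Hin) as [k Hk].
    apply (Hr0 (to_nat (n, k))). unfold u. rewrite cancel_of_to, Hk. apply Hpre. }
  assert (HV : metric_open d' (fun x => x lam0 = false)).
  { apply Hiff. intros x Hx. exists (lam0 :: nil). intros psi Hp.
    rewrite Hp; [auto| left; auto]. }
  destruct (HV phi eq_refl) as [e [He Hball]].
  destruct (archimed (/ e)) as [H1 _].
  pose proof (Rinv_0_lt_compat e He) as Hie.
  assert (Hz : (0 <= up (/ e))%Z) by (apply le_IZR; lra).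
  set (N := Z.to_nat (up (/ e))).
  assert (HN : INR N = IZR (up (/ e))).
  { unfold N. rewrite INR_IZR_INZ. rewrite Z2Nat.id; auto. }
  assert (HNe : / INR (S N) < e).
  { rewrite <- (Rinv_inv e). apply Rinv_lt_contravar.
    - apply Rmult_lt_0_compat; auto. apply lt_0_INR; lia.
    - rewrite S_INR. lra. }
  set (psi := fun lam => match excluded_middle_informative (lam = lam0) with
                         | left _ => true | right _ => false end).
  assert (Hpsi : psi lam0 = false).
  { apply Hball. eapply Rlt_trans; [apply (Hl' N)|exact HNe].
    intros lam Hin. unfold psi. destruct excluded_middle_informative; auto.
    subst. exfalso; eapply Hnot; eauto. }
  unfold psi in Hpsi. destruct excluded_middle_informative; [discriminate|tauto].
Qed.

Theorem mainTheorem3 (L : Type) (Y : Type) (d : Y -> Y -> R)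
  (hL : exists j : R -> L, forall a b, j a = j b -> a = b)
  (hY : dendrite d) :
  (exists D : ((L -> bool) -> Prop) -> Prop,
     decomposition D /\ usc (prod_open L) D /\
     homeomorphic (dec_open (prod_open L) D) (metric_open d))
  /\ ~ metrizable (prod_open L).
Proof.
  destruct hL as [j Hj].
  destruct hY as [Hm [Hne [Hc _]]].
  split; [|apply (not_metrizable L j Hj)].
  destruct Hne as [ys0 _].
  destruct (cantor_surj d Hm Hc ys0) as [h [Hhs Hhc]].
  set (e := fun p : nat => j (INR p)).
  assert (He : forall p q, e p = e q -> p = q).
  { intros p q E. apply INR_eq. apply Hj. exact E. }
  apply (decomp_part d Hm (fun x => h (fun p => x (e p)))).
  - intros V HV x Hx. destruct (HV _ Hx) as [eps [Heps Hb]].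
    destruct (Hhc (fun p => x (e p)) eps Heps) as [P HP].
    exists (map e P). intros psi Hp. apply Hb. apply HP.
    intros p Hin. apply Hp. apply in_map. auto.
  - intros y. destruct (Hhs y) as [s Hs].
    set (x := fun lam => match excluded_middle_informative (exists p, e p = lam) with
       | left H => s (proj1_sig (constructive_indefinite_description _ H)) | right _ => false end).
    exists x. rewrite <- Hs. f_equal. apply functional_extensionality. intros p.
    unfold x. destruct excluded_middle_informative as [H|H].
    + destruct constructive_indefinite_description as [q Hq]. simpl. f_equal. auto.
    + exfalso; eauto.
Qed.

Print Assumptions mainTheorem3.
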